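(* Let $f\colon (A,I)\to(B,J)$ be an excision datum. Then every ring map from $A$ to a valuation ring of rank $\le 1$ factors through $A\to A/I\times B$ (i.e. factors through $A\to A/I$ or through $f\colon A\to B$). In particular $\mathrm{Spec}(A/I\times B)\to\mathrm{Spec}(A)$ is an $\mathrm{arc}$-cover.
   Context: An excision datum is a ring map $f\colon A\to B$ with ideals $I\subset A$, $J\subset B$ such that $f$ carries $I$ isomorphically onto $J$. A map $Y\to X$ of qcqs schemes is an $\mathrm{arc}$-cover if for every valuation ring $V$ of rank $\le1$ and map $\mathrm{Spec}(V)\to X$ there is a faithfully flat map $V\to W$ to a rank $\le 1$ valuation ring and a map $\mathrm{Spec}(W)\to Y$ such that $\mathrm{Spec}(W)\to Y\to X$ equals $\mathrm{Spec}(W)\to\mathrm{Spec}(V)\to X$. *)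

(* Defs.v *)
From HB Require Import structures.
From mathcomp Require Import all_boot all_algebra.
Set Implicit Arguments. Unset Strict Implicit. Unset Printing Implicit Defensive.
Import GRing.Theory.
Local Open Scope ring_scope.

Definition is_ideal (R : comPzRingType) (I : pred R) : Prop :=
  [/\ 0 \in I,
      (forall x y, x \in I -> y \in I -> x + y \in I) &
      (forall r x, x \in I -> r * x \in I)].

Definition excision_datum (A B : comPzRingType) (f : {rmorphism A -> B})
    (I : pred A) (J : pred B) : Prop :=
  [/\ is_ideal I, is_ideal J,
      {in I &, injective f},
      (forall a, a \in I -> f a \in J) &
      (forall b, b \in J -> exists2 a, a \in I & f a = b)].

Definition rdvd (R : comPzRingType) (x y : R) : Prop := exists c : R, y = c * x.

Definition valuation_ring (V : idomainType) : Prop :=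
  forall x y : V, rdvd x y \/ rdvd y x.

(* V is a valuation ring of rank <= 1: valuation ring whose value group
   (nonzero elements modulo units, ordered by divisibility) is archimedean,
   i.e. every nonzero element divides some power of any nonzero non-unit. *)
Definition valuation_ring_rank_le1 (V : idomainType) : Prop :=
  valuation_ring V /\
  (forall x y : V, x != 0 -> y != 0 -> y \notin GRing.unit ->
     exists n : nat, rdvd x (y ^+ n)).

(* A map V -> W of valuation rings is faithfully flat iff it is injective
   and local (Stacks); we use this as the definition for maps between
   valuation rings. *)
Definition valuation_ff (V W : idomainType) (phi : {rmorphism V -> W}) : Prop :=
  injective phi /\ (forall x : V, phi x \is a GRing.unit -> x \is a GRing.unit).

(* Main.v *)
Require Import Defs.
From HB Require Import structures.
From mathcomp Require Import all_boot all_algebra.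
From mathcomp Require Import ring.
From Stdlib Require Import Classical.
Import GRing.Theory.
Local Open Scope ring_scope.

Section Ext.
Variables (A B : comPzRingType) (f : {rmorphism A -> B}) (I : pred A) (J : pred B).
Hypothesis exc : excision_datum f I J.
Variables (V : idomainType) (g : {rmorphism A -> V}).
Hypothesis rk : valuation_ring_rank_le1 V.
Variable a0 : A.
Hypothesis a0I : a0 \in I.
Hypothesis ga0 : g a0 != 0.

Lemma I0 : 0 \in I. Proof. by case: exc => -[H _ _]. Qed.
Lemma ID x y : x \in I -> y \in I -> x + y \in I. Proof. move=> Hx Hy; case: exc => -[_ H _] _ _ _ _; exact: (H x y Hx Hy). Qed.
Lemma IM r x : x \in I -> r * x \in I. Proof. move=> Hx; case: exc => -[_ _ H] _ _ _ _; exact: (H r x Hx). Qed.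
Lemma finj : {in I &, injective f}. Proof. by case: exc. Qed.

Lemma ex_pre b : exists a, (a \in I) && (f a == b * f a0).
Proof.
case: exc => _ [_ _ HJ] _ HfJ Hsurj.
have: b * f a0 \in J by apply: HJ; apply: HfJ.
by case/Hsurj => a aI <-; exists a; rewrite aI eqxx.
Qed.

Definition pre b := xchoose (ex_pre b).
Lemma preI b : pre b \in I. Proof. by case/andP: (xchooseP (ex_pre b)). Qed.
Lemma preE b : f (pre b) = b * f a0. Proof. by case/andP: (xchooseP (ex_pre b)) => _ /eqP. Qed.

Lemma pre_pow b n : g (pre (b ^+ n)) * g a0 ^+ n = g (pre b) ^+ n * g a0.
Proof.
rewrite -!rmorphXn -!rmorphM; congr (g _); apply: finj.
- by rewrite mulrC; apply: IM; apply: preI.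
- by apply: IM.
rewrite !rmorphM !rmorphXn !preE exprMn; ring.
Qed.

Lemma ex_div b : exists v, v * g a0 == g (pre b).
Proof.
case: rk => val arch.
case: (val (g a0) (g (pre b))) => [[c ->]|[y Hy]]; first by exists c.
have [yu|ynu] := boolP (y \is a GRing.unit).
  by exists y^-1; rewrite Hy mulrA mulVr // mul1r.
have y0 : y != 0 by apply: contraNneq ga0 => y0; rewrite Hy y0 mul0r.
case: (arch _ _ ga0 y0 ynu) => n [c Hc].
have key m : g a0 = y ^+ m * g (pre (b ^+ m)).
  apply: (mulIf (expf_neq0 m ga0)).
  by rewrite -mulrA pre_pow mulrA -exprMn -Hy mulrC.
move/negP: ynu; case; apply/unitrPr; exists (c * g (pre (b ^+ n.+1))).
apply: (mulfI (expf_neq0 n y0)).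
rewrite mulr1 [RHS]Hc [in RHS](key n.+1) [y ^+ n.+1]exprS; ring.
Qed.

Definition hv b := xchoose (ex_div b).
Lemma hvE b : hv b * g a0 = g (pre b). Proof. exact/eqP/(xchooseP (ex_div b)). Qed.
Lemma hv_char b a : a \in I -> f a = b * f a0 -> hv b * g a0 = g a.
Proof. by move=> aI fa; rewrite hvE; congr (g _); apply: finj => //; [apply: preI | rewrite preE]. Qed.

Lemma hvf c : hv (f c) = g c.
Proof.
apply: (mulIf ga0); rewrite -rmorphM; apply: hv_char; first by apply: IM.
by rewrite rmorphM.
Qed.

Lemma hv_nmod : nmod_morphism hv.
Proof.
split.
  by rewrite -(rmorph0 f) hvf rmorph0.
move=> x y; apply: (mulIf ga0); rewrite mulrDl !hvE -rmorphD; congr (g _).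
apply: finj; [exact: preI | by apply: ID; apply: preI | by rewrite rmorphD !preE mulrDl].
Qed.

Lemma hv_mon : monoid_morphism hv.
Proof.
split.
  by rewrite -(rmorph1 f) hvf rmorph1.
move=> x y; apply: (mulIf ga0); apply: (mulIf ga0).
have -> : hv x * hv y * g a0 * g a0 = (hv x * g a0) * (hv y * g a0) by ring.
rewrite !hvE -!rmorphM.
congr (g _); apply: finj.
- by rewrite mulrC; apply: IM; apply: preI.
- by apply: IM; apply: preI.
by rewrite !rmorphM !preE; ring.
Qed.

HB.instance Definition _ := GRing.isNmodMorphism.Build B V hv hv_nmod.
HB.instance Definition _ := GRing.isMonoidMorphism.Build B V hv hv_mon.

Lemma factor_ex : exists h : {rmorphism B -> V}, forall a, g a = h (f a).
Proof. by exists hv => a; rewrite /= (hvf a). Qed.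
End Ext.

Theorem mainTheorem5 (A B : comPzRingType) (f : {rmorphism A -> B})
    (I : pred A) (J : pred B) :
  excision_datum f I J ->
  (forall (V : idomainType) (g : {rmorphism A -> V}),
     valuation_ring_rank_le1 V ->
     (forall a, a \in I -> g a = 0) \/
     (exists h : {rmorphism B -> V}, forall a, g a = h (f a)))
  /\
  (forall (V : idomainType) (g : {rmorphism A -> V}),
     valuation_ring_rank_le1 V ->
     exists (W : idomainType) (phi : {rmorphism V -> W})
            (h : {rmorphism (A * B)%type -> W}),
       [/\ valuation_ring_rank_le1 W, valuation_ff phi,
           (forall a, a \in I -> h (a, 0) = 0) &
           (forall a, h (a, f a) = phi (g a))]).
Proof.
move=> exc.
have P1 : forall (V : idomainType) (g : {rmorphism A -> V}),
     valuation_ring_rank_le1 V ->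
     (forall a, a \in I -> g a = 0) \/
     (exists h : {rmorphism B -> V}, forall a, g a = h (f a)).
  move=> V g rk.
  case: (classic (exists a, a \in I /\ g a != 0)) => [[a [aI ga]]|H].
    by right; exact: (@factor_ex A B f I J exc V g rk a aI ga).
  left=> a aI; apply/eqP; apply/negPn/negP => ga; apply: H; by exists a.
split=> // V g rk.
exists V, idfun.
case: (P1 V g rk) => [H|[h Hh]].
  exists (g \o fst); split; [done | by split=> // x | by move=> a aI /=; apply: H | by []].
exists (h \o snd); split; [done | by split=> // x | by move=> a _ /=; rewrite rmorph0 | by move=> a /=; rewrite Hh].
Qed.
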